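(* Let $m>2$ be an integer and let $K$ be a field whose characteristic does not divide $m$ and which contains the $m$-th roots of unity. Let $a\in K^*$ be an element that is not an $m$-th power in $K$, and let $b\in K^*$. Then every $K$-rational automorphism $\psi$ of $\mathbb{P}^1_K$ that maps the set of roots in $\bar K$ of $x^m-a$ onto the set of roots in $\bar K$ of $x^m-b$ is of the form $x\mapsto cx$ or $x\mapsto c/x$ for some nonzero $c\in K$. *)

(* Defs.v *)
From HB Require Import structures.
From mathcomp Require Import all_boot all_order all_algebra.
Set Implicit Arguments. Unset Strict Implicit. Unset Printing Implicit Defensive.
Import GRing.Theory.
Local Open Scope ring_scope.

(* The projective line P^1 over a field L: [Some x] is the affine point x,
   [None] is the point at infinity. *)
Definition P1 (L : Type) := option L.

(* Action on P^1(L) of the Moebius transformation x |-> (al x + be)/(ga x + de),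
   i.e. of the class in PGL_2 of the matrix [[al, be], [ga, de]]
   (meaningful when al*de - be*ga != 0). *)
Definition mobius (L : fieldType) (al be ga de : L) (p : P1 L) : P1 L :=
  match p with
  | Some x => if ga * x + de == 0 then None
              else Some ((al * x + be) / (ga * x + de))
  | None => if ga == 0 then None else Some (al / ga)
  end.

(* Main.v *)
Require Import Defs.
From HB Require Import structures.
From mathcomp Require Import all_boot all_order all_algebra.
From mathcomp Require Import ring.
From Stdlib Require Import Classical.
Import GRing.Theory.
Local Open Scope ring_scope.

Lemma lin_indep (K L : fieldType) (iota : {rmorphism K -> L}) (al : L) :
  (forall z, iota z != al) ->
  forall c0 c1 : K, iota c0 + iota c1 * al = 0 -> c0 = 0 /\ c1 = 0.
Proof.
move=> nK c0 c1 E.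
have c10 : c1 = 0.
  apply/eqP; apply/negPn/negP => nz.
  have inz : iota c1 != 0 by rewrite fmorph_eq0.
  move: (nK (- c0 / c1)); rewrite fmorph_div rmorphN.
  have -> : - iota c0 / iota c1 = al.
    apply: (mulfI inz); rewrite mulrCA divff // mulr1.
    by rewrite -[LHS]add0r -E addrAC subrr add0r.
  by rewrite eqxx.
split=> //; move: E; rewrite c10 rmorph0 mul0r addr0 => /eqP.
by rewrite fmorph_eq0 => /eqP.
Qed.

Lemma three_pts (L : fieldType) (x1 x2 x3 c0 c1 c2 : L) :
  x1 != x2 -> x1 != x3 -> x2 != x3 ->
  c2 * x1 ^+ 2 + c1 * x1 + c0 = 0 ->
  c2 * x2 ^+ 2 + c1 * x2 + c0 = 0 ->
  c2 * x3 ^+ 2 + c1 * x3 + c0 = 0 -> c2 = 0 /\ c0 = 0.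
Proof.
move=> n12 n13 n23 e1 e2 e3.
have h12 : c2 * (x1 + x2) + c1 = 0.
  have : (x1 - x2) * (c2 * (x1 + x2) + c1) = 0.
    by rewrite -[RHS](subrr 0) -{1}e1 -e2; ring.
  by move/eqP; rewrite mulf_eq0 subr_eq0 (negbTE n12) /= => /eqP.
have h13 : c2 * (x1 + x3) + c1 = 0.
  have : (x1 - x3) * (c2 * (x1 + x3) + c1) = 0.
    by rewrite -[RHS](subrr 0) -{1}e1 -e3; ring.
  by move/eqP; rewrite mulf_eq0 subr_eq0 (negbTE n13) /= => /eqP.
have c20 : c2 = 0.
  have : c2 * (x2 - x3) = 0 by rewrite -[RHS](subrr 0) -{1}h12 -h13; ring.
  by move/eqP; rewrite mulf_eq0 subr_eq0 (negbTE n23) orbF => /eqP.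
split=> //.
move: h12 e1; rewrite c20 mul0r add0r => ->; rewrite mul0r mul0r !add0r.
done.
Qed.
Fixpoint redu {K : fieldType} (p q : K) (n : nat) : K * K :=
  match n with
  | 0%N => (0, 1)
  | n'.+1 => let uv := redu p q n' in (uv.2 - p * uv.1, - q * uv.1)
  end.

Lemma redu_spec (K L : fieldType) (iota : {rmorphism K -> L}) (p q : K) (x : L) :
  x ^+ 2 + iota p * x + iota q = 0 ->
  forall n, x ^+ n = iota (redu p q n).1 * x + iota (redu p q n).2.
Proof.
move=> hx; elim=> [|n IH] /=; first by rewrite rmorph0 rmorph1 mul0r add0r expr0.
rewrite exprS IH ?(rmorphB, rmorphM, rmorphN).
apply/eqP; rewrite -subr_eq0; apply/eqP.
transitivity (iota (redu p q n).1 * (x ^+ 2 + iota p * x + iota q)); first ring.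
by rewrite hx mulr0.
Qed.

Lemma key (K L : fieldType) (iota : {rmorphism K -> L}) (m : nat) (a ze : K) (al : L) :
  (2 < m)%N -> (m%:R : K) != 0 -> m.-primitive_root ze -> al ^+ m = iota a ->
  al != 0 -> (forall z, iota z != al) ->
  exists2 om : K, om ^+ m = 1 /\ om != 1 &
    forall c0 c1 c2 : K, iota c0 + iota c1 * al + iota c2 * al ^+ 2 = 0 ->
      iota c0 + iota c1 * (iota om * al) + iota c2 * (iota om * al) ^+ 2 = 0.
Proof.
move=> m2 mn0 pz ham al0 nK.
have lin := @lin_indep K L iota al nK.
case: (classic (exists c0 c1 c2 : K, iota c0 + iota c1 * al + iota c2 * al ^+ 2 = 0
        /\ [|| c0 != 0, c1 != 0 | c2 != 0])) => [[e0 [e1 [e2 [he hnz]]]]|nex].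
2:{ exists ze.
    split; first exact: prim_expr_order.
    apply/negP => /eqP z1.
    have := eq_prim_root_expr pz 1 0; rewrite expr1 expr0 z1 eqxx.
    by rewrite modn_small ?mod0n //; apply: ltn_trans m2.
  move=> c0 c1 c2 h.
  have : ~~ [|| c0 != 0, c1 != 0 | c2 != 0].
    by apply/negP => hh; apply: nex; exists c0, c1, c2.
  rewrite !negb_or !negbK => /and3P[/eqP-> /eqP-> /eqP->].
  by rewrite !rmorph0 !mul0r !addr0. }
have e2n : e2 != 0.
  apply/negP => /eqP e20; move: he; rewrite e20 rmorph0 mul0r addr0 => /lin[e00 e10].
  by move: hnz; rewrite e00 e10 e20 eqxx.
have ie2 : iota e2 != 0 by rewrite fmorph_eq0.
set p := e1 / e2; set q := e0 / e2.
have hq : al ^+ 2 + iota p * al + iota q = 0.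
  rewrite /p /q !fmorph_div.
  have -> : al ^+ 2 + iota e1 / iota e2 * al + iota e0 / iota e2
          = (iota e0 + iota e1 * al + iota e2 * al ^+ 2) / iota e2 by field.
  by rewrite he mul0r.
set al' := - iota p - al.
have hq' : al' ^+ 2 + iota p * al' + iota q = 0.
  by rewrite -[RHS]hq /al'; ring.
have [u0 v0] : (redu p q m).1 = 0 /\ (redu p q m).2 = a.
  have := @redu_spec K L iota p q al hq m; rewrite ham => h.
  have : iota ((redu p q m).2 - a) + iota (redu p q m).1 * al = 0.
    by rewrite rmorphB h; ring.
  by move/lin => [/eqP]; rewrite subr_eq0 => /eqP -> ->.
have ham' : al' ^+ m = iota a by rewrite (@redu_spec K L iota p q al' hq' m) u0 v0 rmorph0 mul0r add0r.
have neq : al' != al.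
  apply/negP => /eqP e.
  have : iota p + iota 2 * al = 0.
    rewrite rmorph_nat; transitivity (- (al' - al)); first by rewrite /al'; ring.
    by rewrite e subrr oppr0.
  move/lin => [p0 two0].
  have hal2 : al ^+ 2 = iota (- q).
    by move: hq; rewrite p0 rmorph0 mul0r addr0 rmorphN => /eqP; rewrite addr_eq0 => /eqP.
  have mo : odd m.
    apply/negPn/negP => ev; move: mn0.
    rewrite -(odd_double_half m) (negbTE ev) add0n -muln2 natrM.
    by rewrite two0 mulr0 eqxx.
  apply: (negP (nK (a / (- q) ^+ (m./2)))); apply/eqP.
  have hk : al ^+ m = al * iota ((- q) ^+ (m./2)).
    by rewrite rmorphXn -hal2 -exprM -exprS mul2n -[in LHS](odd_double_half m) mo.
  have nz : iota ((- q) ^+ (m./2)) != 0.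
    by rewrite rmorphXn -hal2 expf_neq0 // expf_neq0.
  by rewrite fmorph_div -ham hk mulfK.
have rho : (al' / al) ^+ m = 1.
  rewrite exprMn exprVn ham ham' divff // -ham expf_neq0 //.
have pz' : m.-primitive_root (iota ze) by rewrite fmorph_primitive_root.
have [i hi] := prim_rootP pz' rho.
exists (ze ^+ i).
  split; first by rewrite exprAC (prim_expr_order pz) expr1n.
  apply/negP => /eqP e1'.
  move: hi; rewrite -rmorphXn e1' rmorph1 => /eqP.
  by rewrite -[1](divff al0) (inj_eq (mulIf _)) ?invr_eq0 // (negbTE neq).
have hw : iota (ze ^+ i) * al = al' by rewrite rmorphXn -hi divfK.
move=> c0 c1 c2 hc.
have [hc0 hc1] : c0 - c2 * q = 0 /\ c1 - c2 * p = 0.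
  apply: lin.
  transitivity ((iota c0 + iota c1 * al + iota c2 * al ^+ 2)
     - iota c2 * (al ^+ 2 + iota p * al + iota q)); first by rewrite !rmorphB !rmorphM; ring.
  by rewrite hc hq mulr0 subr0.
rewrite hw.
move/eqP: hc0; rewrite subr_eq0 => /eqP ->.
move/eqP: hc1; rewrite subr_eq0 => /eqP ->.
transitivity (iota c2 * (al' ^+ 2 + iota p * al' + iota q)); first by rewrite !rmorphM; ring.
by rewrite hq' mulr0.
Qed.
Theorem lemma4p2 (K : fieldType) (L : closedFieldType) (iota : {rmorphism K -> L})
  (m : nat) (a b al be ga de : K) :
  (2 < m)%N ->
  (m%:R : K) != 0 ->
  (exists z : K, m.-primitive_root z) ->
  a != 0 ->
  ~ (exists y : K, y ^+ m = a) ->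
  b != 0 ->
  al * de - be * ga != 0 ->
  (forall x : L, x ^+ m = iota a ->
     exists2 y : L, y ^+ m = iota b &
       mobius (iota al) (iota be) (iota ga) (iota de) (Some x) = Some y) ->
  (forall y : L, y ^+ m = iota b ->
     exists2 x : L, x ^+ m = iota a &
       mobius (iota al) (iota be) (iota ga) (iota de) (Some x) = Some y) ->
  exists2 c : K, c != 0 &
    (forall p : P1 L,
       mobius (iota al) (iota be) (iota ga) (iota de) p
       = mobius (iota c) 0 0 1 p)
    \/
    (forall p : P1 L,
       mobius (iota al) (iota be) (iota ga) (iota de) p
       = mobius 0 (iota c) 1 0 p).
Proof.
move=> m2 mn0 [ze pz] a0 npow b0 det H1 _.
have m0 : (0 < m)%N by apply: ltn_trans m2.
have [alp ham] : exists alp : L, alp ^+ m = iota a.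
  have : size ('X^m - (iota a)%:P : {poly L}) != 1%N by rewrite size_XnsubC // eqSS -lt0n.
  move/closed_rootP => [x hx]; exists x.
  by move: hx; rewrite rootE !hornerE subr_eq0 => /eqP.
have ia0 : iota a != 0 by rewrite fmorph_eq0.
have ib0 : iota b != 0 by rewrite fmorph_eq0.
have alp0 : alp != 0.
  by apply/negP => /eqP e; move: ia0; rewrite -ham e expr0n (gtn_eqF m0) eqxx.
have nK : forall z, iota z != alp.
  move=> z; apply/negP => /eqP e; apply: npow; exists z.
  by apply: (fmorph_inj iota); rewrite rmorphXn e.
have [om [omm om1] hom] := @key K L iota m a ze alp m2 mn0 pz ham alp0 nK.
set A := iota al; set B := iota be; set C := iota ga; set D := iota de.
set w := iota om.
set z := iota ze.
have pz' : m.-primitive_root z by rewrite fmorph_primitive_root.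
have zm : z ^+ m = 1 := prim_expr_order pz'.
have wm : w ^+ m = 1 by rewrite -rmorphXn omm rmorph1.
have Sa : forall r x, r ^+ m = 1 -> x ^+ m = iota a -> (r * x) ^+ m = iota a.
  by move=> r x hr hx; rewrite exprMn hr hx mul1r.
pose psi x := (A * x + B) / (C * x + D).
have H1' : forall x, x ^+ m = iota a -> C * x + D != 0 /\ psi x ^+ m = iota b.
  move=> x hx; have [y hy] := H1 x hx; rewrite /mobius.
  by case: eqP => // hn [ey]; split; [apply/eqP | rewrite /psi ey].
have psi0 : forall x, x ^+ m = iota a -> psi x != 0.
  move=> x hx; apply/negP => /eqP e; have [_ h] := H1' x hx.
  by move: ib0; rewrite -h e expr0n (gtn_eqF m0) eqxx.
have Nx : forall x, x ^+ m = iota a -> A * x + B = psi x * (C * x + D).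
  by move=> x hx; rewrite /psi divfK //; case: (H1' x hx).
set y0 := psi alp.
set nu := psi (w * alp) / y0.
have y00 : y0 != 0 := psi0 _ ham.
have claim : forall i, psi (z ^+ i * (w * alp)) = nu * psi (z ^+ i * alp).
  move=> i.
  have hi : (z ^+ i * alp) ^+ m = iota a by apply: (Sa) => //; rewrite exprAC zm expr1n.
  have hwi : (z ^+ i * (w * alp)) ^+ m = iota a.
    by apply: (Sa); [rewrite exprAC zm expr1n | apply: (Sa)].
  have hw : (w * alp) ^+ m = iota a by apply: (Sa).
  have rho : (psi (z ^+ i * alp) / y0) ^+ m = 1.
    by rewrite exprMn exprVn (H1' _ hi).2 (H1' _ ham).2 divff.
  have [k hk] := prim_rootP pz' rho.
  have ek : psi (z ^+ i * alp) = z ^+ k * y0 by rewrite -hk divfK.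
  pose c2 := al * ga * ze ^+ i - ze ^+ k * (al * ga * ze ^+ i).
  pose c1 := al * ze ^+ i * de + be * ga - ze ^+ k * (al * de + be * ga * ze ^+ i).
  pose c0 := be * de - ze ^+ k * (be * de).
  have Ef : forall x, iota c0 + iota c1 * x + iota c2 * x ^+ 2
     = (A * (z ^+ i * x) + B) * (C * x + D) - z ^+ k * ((A * x + B) * (C * (z ^+ i * x) + D)).
    move=> x; rewrite /c0 /c1 /c2 /A /B /C /D /z.
    rewrite !(rmorphB, rmorphD, rmorphM, rmorphXn); ring.
  have E0 : iota c0 + iota c1 * alp + iota c2 * alp ^+ 2 = 0.
    rewrite Ef (Nx _ hi) (Nx _ ham) ek -/y0; ring.
  have := hom _ _ _ E0; rewrite Ef -/w (Nx _ hwi) (Nx _ hw) => /eqP.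
  have d1 := (H1' _ hwi).1; have d2 := (H1' _ hw).1.
  have -> : psi (z ^+ i * (w * alp)) * (C * (z ^+ i * (w * alp)) + D) * (C * (w * alp) + D) -
      z ^+ k * (psi (w * alp) * (C * (w * alp) + D) * (C * (z ^+ i * (w * alp)) + D))
      = (psi (z ^+ i * (w * alp)) - z ^+ k * psi (w * alp))
        * ((C * (z ^+ i * (w * alp)) + D) * (C * (w * alp) + D)) by ring.
  rewrite !mulf_eq0 (negbTE d1) (negbTE d2) /= !orbF subr_eq0 => /eqP ->.
  by rewrite ek /nu; field.
have idet : A * D - B * C != 0.
  by rewrite /A /B /C /D -!rmorphM -rmorphB fmorph_eq0.
have inj : forall x y, x ^+ m = iota a -> y ^+ m = iota a -> psi x = psi y -> x = y.
  move=> x y hx hy e.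
  have : (A * D - B * C) * (x - y) = 0.
    transitivity ((A * x + B) * (C * y + D) - (A * y + B) * (C * x + D)); first ring.
    by rewrite (Nx _ hx) (Nx _ hy) e; ring.
  by move/eqP; rewrite mulf_eq0 (negbTE idet) /= subr_eq0 => /eqP.
have w0 : w != 0 by rewrite fmorph_eq0; apply/negP => /eqP e; move: omm; rewrite e expr0n (gtn_eqF m0) => /eqP; rewrite eq_sym oner_eq0.
have nu1 : nu != 1.
  apply/negP => /eqP e; move: (claim 0%N); rewrite expr0 !mul1r e mul1r => /inj.
  have hw : (w * alp) ^+ m = iota a by apply: (Sa).
  move=> /(_ hw ham) /eqP; rewrite -{2}(mul1r alp) (inj_eq (mulIf alp0)).
  by rewrite /w fmorph_eq1 (negbTE om1).
pose q2 := A * C * w * (1 - nu).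
pose q1 := A * w * D + B * C - nu * (A * D + B * C * w).
pose q0 := B * D * (1 - nu).
have Qx : forall j, q2 * (z ^+ j * alp) ^+ 2 + q1 * (z ^+ j * alp) + q0 = 0.
  move=> j; set x := z ^+ j * alp.
  have hx : x ^+ m = iota a by apply: (Sa) => //; rewrite exprAC zm expr1n.
  have hwx : (w * x) ^+ m = iota a by apply: (Sa).
  have cj := claim j; rewrite mulrCA -/x in cj.
  transitivity ((A * (w * x) + B) * (C * x + D) - nu * ((A * x + B) * (C * (w * x) + D))).
    rewrite /q2 /q1 /q0; ring.
  rewrite (Nx _ hx) (Nx _ hwx) cj; ring.
have dz : forall i j, (i < m)%N -> (j < m)%N -> i != j -> z ^+ i * alp != z ^+ j * alp.
  move=> i j hi hj ij; rewrite (inj_eq (mulIf alp0)) (eq_prim_root_expr pz').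
  by rewrite !modn_small.
have m1 : (1 < m)%N by apply: ltn_trans m2.
have [q20 q00] := @three_pts L _ _ _ q0 q1 q2 (dz 0%N 1%N m0 m1 isT) (dz 0%N 2%N m0 m2 isT)
   (dz 1%N 2%N m1 m2 isT) (Qx 0%N) (Qx 1%N) (Qx 2%N).
have nu1' : 1 - nu != 0 by rewrite subr_eq0 eq_sym.
have alga : al * ga = 0.
  apply/eqP; rewrite -(fmorph_eq0 iota) rmorphM -/A -/C; apply/eqP.
  by move/eqP: q20; rewrite /q2 !mulf_eq0 (negbTE w0) (negbTE nu1') !orbF => /orP[] /eqP ->;
     rewrite ?mul0r ?mulr0.
have bede : be * de = 0.
  apply/eqP; rewrite -(fmorph_eq0 iota) rmorphM -/B -/D; apply/eqP.
  by move/eqP: q00; rewrite /q0 !mulf_eq0 (negbTE nu1') !orbF => /orP[] /eqP ->;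
     rewrite ?mul0r ?mulr0.
move/eqP: alga; rewrite mulf_eq0 => /orP[/eqP al0|/eqP ga0].
- move: det; rewrite al0 mul0r sub0r oppr_eq0 mulf_eq0 negb_or => /andP[be0 ga0].
  have de0 : de = 0 by move/eqP: bede; rewrite mulf_eq0 (negbTE be0) /= => /eqP.
  exists (be / ga); first by rewrite mulf_neq0 // invr_eq0.
  right; case=> [x|] /=; rewrite /A /B /C /D ?al0 ?de0 ?rmorph0 ?addr0 ?mul0r ?add0r.
    rewrite mul1r mulf_eq0 fmorph_eq0 (negbTE ga0) /=.
    case: eqP => // /eqP xn; rewrite fmorph_div; congr Some; field.
    by rewrite xn fmorph_eq0.
  by rewrite fmorph_eq0 (negbTE ga0) ?oner_eq0.
- move: det; rewrite ga0 mulr0 subr0 mulf_eq0 negb_or => /andP[al0 de0].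
  have be0 : be = 0 by move/eqP: bede; rewrite mulf_eq0 (negbTE de0) orbF => /eqP.
  exists (al / de); first by rewrite mulf_neq0 // invr_eq0.
  left; case=> [x|] /=; rewrite /A /B /C /D ?ga0 ?be0 ?rmorph0 ?addr0 ?mul0r ?add0r.
    rewrite oner_eq0 fmorph_eq0 (negbTE de0) fmorph_div; congr Some; field.
    by rewrite oner_eq0 fmorph_eq0.
  by rewrite !eqxx.
Qed.
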